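(* Every tree converges to the empty graph under the operator $KB_e$; that is, for every tree $T$ there is $m$ such that $KB_e^k(T)$ is the empty graph for all $k\ge m$.
   Context: All graphs are finite, simple and undirected. A biclique of a graph $G$ is a maximal (with respect to inclusion) induced subgraph of $G$ that is a complete bipartite graph $K_{p,q}$ with $p,q\ge 1$. The edge-biclique graph $KB_e(G)$ is the graph with one vertex for each biclique of $G$, in which two distinct vertices are adjacent if and only if the corresponding bicliques have at least one edge in common; if $G$ has no bicliques (e.g. $G$ has no edges), $KB_e(G)$ is the empty graph (no vertices). Iterates: $KB_e^0(G)=G$, $KB_e^k(G)=KB_e(KB_e^{k-1}(G))$. *)

(* Defs.v *)
From mathcomp Require Import all_boot.
Set Implicit Arguments. Unset Strict Implicit. Unset Printing Implicit Defensive.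

Record graph := Graph {
  gV :> finType;
  gE : rel gV;
  gE_sym : symmetric gE;
  gE_irr : irreflexive gE }.

Section Bicliques.
Variable G : graph.
Local Notation V := (gV G).
Local Notation adj := (@gE G).

Definition is_complete_bip (S : {set V}) : bool :=
  [exists X : {set V},
    [&& X \subset S, X != set0, S :\: X != set0,
        [forall x in X, forall y in S :\: X, adj x y],
        [forall x in X, forall y in X, ~~ adj x y] &
        [forall x in S :\: X, forall y in S :\: X, ~~ adj x y]]].

(* A biclique: an inclusion-maximal induced complete bipartite subgraph
   (an induced subgraph is determined by its vertex set). *)
Definition is_biclique (S : {set V}) : bool :=
  is_complete_bip S &&
  [forall S' : {set V}, (S \subset S') && is_complete_bip S' ==> (S' == S)].

Definition biclique := {S : {set V} | is_biclique S}.

(* Two bicliques have an edge in common: an edge of G with both ends in both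
   (bicliques are induced subgraphs). *)
Definition share_edge (B1 B2 : {set V}) : bool :=
  [exists u, exists v, [&& adj u v, u \in B1, v \in B1, u \in B2 & v \in B2]].

Definition kbe_rel : rel biclique :=
  fun B1 B2 => (B1 != B2) && share_edge (val B1) (val B2).

Lemma kbe_rel_sym : symmetric kbe_rel.
Proof.
move=> B1 B2; rewrite /kbe_rel eq_sym; congr (_ && _).
apply/existsP/existsP => -[u /existsP [v /and5P [h1 h2 h3 h4 h5]]];
  exists u; apply/existsP; exists v; apply/and5P; split => //.
Qed.

Lemma kbe_rel_irr : irreflexive kbe_rel.
Proof. by move=> B; rewrite /kbe_rel eqxx. Qed.

End Bicliques.

Definition KBe (G : graph) : graph :=
  @Graph (biclique G) (@kbe_rel G) (@kbe_rel_sym G) (@kbe_rel_irr G).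

Definition KBe_iter (k : nat) (G : graph) : graph := iter k KBe G.

Definition is_empty_graph (G : graph) : Prop := #|gV G| = 0.

(* Trees: nonempty, connected, acyclic finite simple graphs.  A cycle is a
   simple closed walk with at least 3 distinct vertices. *)
Definition connected (G : graph) : Prop :=
  forall x y : gV G, connect (@gE G) x y.
Definition acyclic (G : graph) : Prop :=
  forall c : seq (gV G), ucycle (@gE G) c -> size c < 3.
Definition is_tree (G : graph) : Prop :=
  0 < #|gV G| /\ connected G /\ acyclic G.

(* Main.v *)
Require Import Defs.
From mathcomp Require Import all_boot.

Set Implicit Arguments. Unset Strict Implicit. Unset Printing Implicit Defensive.

Section Forest.
Variable G : graph.
Hypothesis acyc : acyclic G.
Local Notation V := (gV G).
Local Notation adj := (@gE G).

Definition Nv (v : V) : {set V} := v |: [set u | adj v u].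

Lemma adj_neq a b : adj a b -> a != b.
Proof. by move=> ab; apply: contraTneq ab => ->; rewrite gE_irr. Qed.

Lemma no_tri a b c : adj a b -> adj b c -> adj c a -> False.
Proof.
move=> ab bc ca.
have nab := adj_neq ab; have nbc := adj_neq bc; have nca := adj_neq ca.
suff: ucycle adj [:: a; b; c] by move/acyc.
rewrite /ucycle /= ab bc ca /= !inE negb_or nab eq_sym nca nbc.
done.
Qed.

Lemma no_sq x1 y1 x2 y2 : x1 != x2 -> y1 != y2 ->
  adj x1 y1 -> adj y1 x2 -> adj x2 y2 -> adj y2 x1 -> False.
Proof.
move=> n12 m12 a b c d.
have := adj_neq a; have := adj_neq b; have := adj_neq c; have := adj_neq d.
move=> h1 h2 h3 h4.
suff: ucycle adj [:: x1; y1; x2; y2] by move/acyc.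
rewrite /ucycle /= a b c d /= !inE !negb_or n12 m12. idtac.
by rewrite h4 h3 h2 eq_sym h1.
Qed.

Lemma Nv_cb v u : adj v u -> is_complete_bip (Nv v).
Proof.
move=> vu; apply/existsP; exists [set v].
have inD y : (y \in Nv v :\: [set v]) = (y != v) && adj v y.
  by rewrite !inE; case: (y =P v).
apply/and3P; split; [|by apply/set0Pn; exists v; rewrite inE|apply/and4P; split].
- by rewrite sub1set !inE eqxx.
- by apply/set0Pn; exists u; rewrite inD vu eq_sym adj_neq.
- apply/forall_inP => x; rewrite inE => /eqP ->.
  by apply/forall_inP => y; rewrite inD => /andP[].
- apply/forall_inP => x; rewrite inE => /eqP ->.
  by apply/forall_inP => y; rewrite inE => /eqP ->; rewrite gE_irr.
- apply/forall_inP => x; rewrite inD => /andP[_ vx].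
  apply/forall_inP => y; rewrite inD => /andP[_ vy].
  by apply/negP => xy; apply: (no_tri vx xy); rewrite gE_sym.
Qed.

Lemma cb_sub S : is_complete_bip S ->
  exists v, S \subset Nv v /\ exists u, adj v u.
Proof.
case/existsP => X /and3P[XS /set0Pn[x0 Xx0] /and4P[/set0Pn[y0 Yy0] /forall_inP XY
   /forall_inP XX /forall_inP YY]].
have adjXY x y : x \in X -> y \in S :\: X -> adj x y.
  by move=> hx hy; have /forall_inP := XY x hx; apply.
case: (boolP [forall x in X, x == x0]) => [/forall_inP allx|].
  exists x0; split; last by exists y0; apply: adjXY.
  apply/subsetP => s Ss; case: (boolP (s \in X)) => sX.
    by rewrite (eqP (allx _ sX)) !inE eqxx.
  by rewrite !inE adjXY ?orbT // inE sX Ss.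
case/forall_inPn => x1 Xx1 n10.
have ally y : y \in S :\: X -> y = y0.
  move=> Yy; apply/eqP; apply/negPn/negP => ny.
  apply: (no_sq (x1 := x0) (y1 := y0) (x2 := x1) (y2 := y)).
  - by rewrite eq_sym.
  - by rewrite eq_sym.
  - exact: adjXY.
  - by rewrite gE_sym; apply: adjXY.
  - exact: adjXY.
  - by rewrite gE_sym; apply: adjXY.
exists y0; split; last by exists x0; rewrite gE_sym; apply: adjXY.
apply/subsetP => s Ss; case: (boolP (s \in X)) => sX.
  by rewrite !inE gE_sym adjXY ?orbT.
have -> : s = y0 by apply: ally; rewrite inE sX Ss.
by rewrite !inE eqxx.
Qed.

Lemma bic_N S : is_biclique S -> exists v, S = Nv v.
Proof.
case/andP => cbS /forallP maxS.
have [v [sub [u vu]]] := cb_sub cbS.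
exists v; apply/eqP; rewrite eq_sym.
have := maxS (Nv v); rewrite sub (Nv_cb vu) /=. done.
Qed.

Lemma edge_in_N v a b : adj a b -> a \in Nv v -> b \in Nv v -> a = v \/ b = v.
Proof.
move=> ab; rewrite !inE; case: (a =P v) => [->|_]; first by left.
case: (b =P v) => [->|_]; first by right.
move=> /= va vb; exfalso; apply: (no_tri va ab); by rewrite gE_sym.
Qed.

Lemma cb_two (S : {set V}) : is_complete_bip S -> exists x y, [/\ x \in S, y \in S & x != y].
Proof.
case/existsP => X /and3P[XS /set0Pn[x0 Xx0] /and4P[/set0Pn[y0 Yy0] _ _ _]].
exists x0, y0; split.
- exact: (subsetP XS).
- by move: Yy0; rewrite inE => /andP[].
- by apply: contraTneq Yy0 => <-; rewrite inE Xx0.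
Qed.

Lemma last_take_index (x y : V) p : y \in p ->
  last x (take (index y p).+1 p) = y.
Proof.
move=> yp; have ip : index y p < size p by rewrite index_mem.
rewrite (last_nth x) size_takel //= nth_take //.
exact: nth_index.
Qed.

Lemma leafless_false (x0 : V) :
  (forall x, exists y, adj x y) ->
  (forall x y, adj x y -> exists z, adj x z && (z != y)) -> False.
Proof.
move=> nb lf.
suff H k : exists x p, [/\ k <= size p, uniq (x :: p) & path adj x p].
  have [x [p [hk hu _]]] := H #|V|.
  have := max_card (mem (x :: p)); rewrite (card_uniqP hu) /=.
  by rewrite ltnNge hk.
elim: k => [|k [x [p [hk hu hp]]]]; first by exists x0, [::].
have [y [xy hy]] : exists y, adj x y /\ (if p is x1 :: _ then y != x1 else true).
  case: p hk hu hp => [|x1 p'] _ _ /=.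
    by have [y xy] := nb x; exists y.
  case/andP => xx1 _; have [z /andP[xz nz]] := lf _ _ xx1; by exists z.
case: (boolP (y \in p)) => yp.
  exfalso.
  set q := take (index y p).+1 p.
  have iy : 0 < index y p.
    case: p yp hy {hk hu hp q} => //= x1 p' _.
    by rewrite eq_sym => /negbTE ->.
  have ip : index y p < size p by rewrite index_mem.
  suff: ucycle adj (x :: q).
    by move/acyc; rewrite /= size_takel //; move: iy; case: (index y p).
  rewrite /ucycle; apply/andP; split; last exact: (take_uniq (index y p).+2 hu).
  rewrite /cycle rcons_path last_take_index // gE_sym xy andbT.
  move: hp; rewrite -(cat_take_drop (index y p).+1 p) cat_path.
  by case/andP.
exists y, (x :: p); split => //.
- rewrite cons_uniq hu andbT inE negb_or yp andbT.
  by rewrite eq_sym adj_neq.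
- by rewrite /= gE_sym xy hp.
Qed.

Lemma cenP (B : biclique G) : {v | val B == Nv v}.
Proof.
apply: sigW; have [v hv] := bic_N (valP B); by exists v; apply/eqP.
Qed.

Definition cen (B : biclique G) : V := sval (cenP B).

Lemma cenE B : val B = Nv (cen B).
Proof. by apply/eqP; rewrite /cen; case: (cenP B). Qed.

Lemma cen_inj : injective cen.
Proof. by move=> B1 B2 e; apply: val_inj; rewrite !cenE e. Qed.

Lemma cen_adj B1 B2 : kbe_rel B1 B2 -> adj (cen B1) (cen B2).
Proof.
case/andP => n12 /existsP[u /existsP[w /and5P[uw u1 w1 u2 w2]]].
have nc : cen B1 != cen B2 by apply: contraNneq n12 => /cen_inj ->.
rewrite cenE in u1 w1; rewrite cenE in u2 w2.
case: (edge_in_N uw u1 w1) => e1; case: (edge_in_N uw u2 w2) => e2.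
- by rewrite -e1 -e2 eqxx in nc.
- by rewrite -e1 -e2.
- by rewrite -e1 -e2 gE_sym.
- by rewrite -e1 -e2 eqxx in nc.
Qed.

Lemma KBe_acyclic : acyclic (KBe G).
Proof.
move=> c /andP[cc uc]; rewrite -(size_map cen); apply: acyc.
apply/andP; split; last by rewrite (map_inj_uniq cen_inj).
by apply: (homo_cycle (e := @kbe_rel G)) => // x y; apply: cen_adj.
Qed.

Lemma KBe_card : #|KBe G| <= #|G|.-1.
Proof.
have le : #|KBe G| <= #|G|.
  rewrite -cardsT (_ : #|[set: KBe G]| = #|cen @: [set: biclique G]|) ?max_card //.
  by rewrite card_imset //; exact: cen_inj.
case: (posnP #|G|) => [z|pos]; first by move: le; rewrite z.
rewrite -ltnS prednK // ltn_neqAle le andbT; apply/negP => /eqP eqc.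
have full : cen @: [set: biclique G] = [set: V].
  apply/eqP; rewrite eqEcard subsetT cardsT card_imset; last exact: cen_inj.
  by rewrite cardsT; exact: (eq_leq (esym eqc)).
have surj v : exists B, v = cen B.
  have : v \in cen @: [set: biclique G] by rewrite full inE.
  by case/imsetP => B _ ->; exists B.
have [x0 _] : exists x : V, true.
  by move: pos => /card_gt0P [x _]; exists x.
apply: (leafless_false x0).
- move=> x; have [B ->] := surj x.
  have [_ [bicB _]] : True /\ (is_biclique (val B) /\ True) by split => //; split => //; exact: valP.
  case/andP: bicB => cbB _; have [a [b [aB bB nab]]] := cb_two cbB.
  rewrite cenE in aB bB.
  move: aB bB; rewrite !inE.
  case: (a =P cen B) => [ea|_] /=; last by move=> h _; exists a.
  case: (b =P cen B) => [eb|_] /=; last by move=> _ h; exists b.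
  by rewrite ea eb eqxx in nab.
- move=> x y xy; case: (boolP [exists z, adj x z && (z != y)]) => [/existsP //|/existsPn hn]; exfalso.
  have [B eB] := surj x; have [B' eB'] := surj y.
  have sub : Nv x \subset Nv y.
    apply/subsetP => z; rewrite !inE; case/orP => [/eqP ->|xz].
      by rewrite gE_sym xy orbT.
    by have := hn z; rewrite xz /= => /negPn /eqP ->; rewrite eqxx.
  have cb : is_complete_bip (Nv y) by apply: (Nv_cb (u := x)); rewrite gE_sym.
  have bx : is_biclique (Nv x) by rewrite eB -cenE (valP B).
  case/andP: bx => _ /forallP/(_ (Nv y)); rewrite sub cb /= => /eqP eN.
  have : B' = B by apply: val_inj; rewrite !cenE -eB -eB' eN.
  move=> eBB; move: xy; rewrite eB eB' eBB gE_irr //.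
Qed.

End Forest.

Lemma iter_acyclic k (G : graph) : acyclic G -> acyclic (KBe_iter k G).
Proof.
move=> h; rewrite /KBe_iter; elim: k => //= k IH; exact: KBe_acyclic.
Qed.

Lemma iter_card k (G : graph) : acyclic G -> #|KBe_iter k G| <= #|G| - k.
Proof.
move=> h; elim: k => [|k IH]; first by rewrite subn0.
have H := KBe_card (@iter_acyclic k G h).
rewrite /KBe_iter iterS; apply: leq_trans H _.
rewrite subnS; case: #|KBe_iter k G| IH => [|n] /= IH; first exact: leq0n.
by rewrite -ltnS (ltn_predK IH).
Qed.

Theorem mainTheorem8 (T : graph) :
  is_tree T ->
  exists m : nat, forall k : nat, m <= k -> is_empty_graph (KBe_iter k T).
Proof.
case=> _ [_ ac]; exists #|T| => k hk; rewrite /is_empty_graph.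
apply/eqP; rewrite -leqn0; apply: leq_trans (iter_card k ac) _.
by rewrite leqn0 subn_eq0.
Qed.
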